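(* Let $\mathcal Q_1,\dots,\mathcal Q_l\subseteq V$ be linear subspaces such that the linear spaces $\mathcal L_1,\dots,\mathcal L_l\subseteq\mathbb P(V^* )$ defined by $(\mathcal Q_1),\dots,(\mathcal Q_l)$ form a linearly joined sequence. Let $V'=\mathcal F_1\oplus\dots\oplus\mathcal F_l$ be a $K$-vector space, set $\tilde{\mathcal Q}_i=\mathcal Q_i\oplus\bigoplus_{j\neq i}\mathcal F_j\subseteq V\oplus V'$, and let $\tilde{\mathcal L}_i\subseteq\mathbb P((V\oplus V')^* )$ be the linear space defined by the ideal $(\tilde{\mathcal Q}_i)$ of $K[V\oplus V']$; identify $\mathcal L_i$ with the linear space defined by $(\mathcal Q_i)+(V')$ in $\mathbb P((V\oplus V')^* )$. Then: (1) the sequence $\tilde{\mathcal L}_1,\dots,\tilde{\mathcal L}_l$ is linearly joined, and for every $i=2,\dots,l$, $\tilde{\mathcal L}_i\cap(\tilde{\mathcal L}_1\cup\dots\cup\tilde{\mathcal L}_{i-1})=\mathcal L_i\cap(\mathcal L_1\cup\dots\cup\mathcal L_{i-1})$; (2) in $K[V\oplus V']$, $$\bigcap_{i=1}^l(\tilde{\mathcal Q}_i)=\Big(\bigcap_{i=1}^l(\mathcal Q_i)\Big)+\sum_{i=1}^l(\tilde{\mathcal Q}_i\times\mathcal F_i),$$ where $(\tilde{\mathcal Q}_i\times\mathcal F_i)$ is the ideal generated by all products $fg$ with $f\in\tilde{\mathcal Q}_i$, $g\in\mathcal F_i$.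
   Context: $K$ is a field, $V$ a finite-dimensional $K$-vector space, $S=K[V]$. For $Q$ a subset of a vector space $W$, $(Q)$ is the ideal of $K[W]$ generated by $Q$. A sequence $\mathcal L_1,\dots,\mathcal L_l$ of linear subspaces of a projective space is linearly joined if for every $i=1,\dots,l-1$, $\mathcal L_{i+1}\cap(\mathcal L_1\cup\dots\cup\mathcal L_i)=\mathcal L_{i+1}\cap\mathrm{span}(\mathcal L_1\cup\dots\cup\mathcal L_i)$, where $\mathrm{span}$ is the smallest linear subspace containing the set. *)

(* Defs.v *)
(* field K, V = K^n (row vectors), V' = K^m, K[W] = {mpoly K[dim W]}. *)
From HB Require Import structures.
From mathcomp Require Import all_boot all_order all_algebra.
From mathcomp Require Import mpoly.
Set Implicit Arguments. Unset Strict Implicit. Unset Printing Implicit Defensive.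
Import Order.TTheory GRing.Theory.
Local Open Scope ring_scope.

Section Defs.
Variable K : fieldType.

(* the vector v of W = K^N, seen as a linear form (degree-1 element) of K[W] *)
Definition linform (N : nat) (v : 'rV[K]_N) : {mpoly K[N]} :=
  \sum_(j < N) v 0 j *: 'X_j.

Definition ideal_gen (N : nat) (P : {mpoly K[N]} -> Prop) : {mpoly K[N]} -> Prop :=
  fun p => exists s : seq ({mpoly K[N]} * {mpoly K[N]}),
    (forall x, x \in s -> P x.2) /\ p = \sum_(x <- s) x.1 * x.2.

Definition lin_ideal (N : nat) (Q : 'rV[K]_N -> Prop) : {mpoly K[N]} -> Prop :=
  ideal_gen (fun p => exists v, Q v /\ p = linform v).

Definition ideal_add (N : nat) (I J : {mpoly K[N]} -> Prop) : {mpoly K[N]} -> Prop :=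
  fun p => exists a b, I a /\ J b /\ p = a + b.

Definition ideal_bigsum (N l : nat) (I : 'I_l -> {mpoly K[N]} -> Prop) :=
  ideal_gen (fun p => exists i, I i p).

Definition ideal_bigcap (N l : nat) (I : 'I_l -> {mpoly K[N]} -> Prop) :=
  fun p : {mpoly K[N]} => forall i, I i p.

Definition embl (n m : nat) (p : {mpoly K[n]}) : {mpoly K[n + m]} :=
  comp_mpoly [tuple ('X_(lshift m i) : {mpoly K[n + m]}) | i < n] p.

Definition ideal_ext (n m : nat) (I : {mpoly K[n]} -> Prop) : {mpoly K[n + m]} -> Prop :=
  ideal_gen (fun p => exists q, I q /\ p = embl m q).

(* A point of P(W^* ) is represented by any nonzero x in W^* = K^N (pairing
   <q, x> = sum_j q_j x_j, i.e. evaluation of linform q at x); a set of points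
   of P(W^* ) is represented by the (scaling-closed) set of its nonzero
   representatives. *)
Definition Zset (N : nat) (I : {mpoly K[N]} -> Prop) : 'rV[K]_N -> Prop :=
  fun x => x != 0 /\ forall p, I p -> p.@[fun j => x 0 j] = 0.

(* linear subspaces of P(W^* ): those defined by (Q), Q a linear subspace of W
   (given as the row space of a matrix) *)
Definition plinear (N : nat) (W : 'M[K]_N) : 'rV[K]_N -> Prop :=
  Zset (lin_ideal (fun v => (v <= W)%MS)).

Definition pspan (N : nat) (S : 'rV[K]_N -> Prop) : 'rV[K]_N -> Prop :=
  fun x => forall W : 'M[K]_N, (forall y, S y -> plinear W y) -> plinear W x.

(* union of L_1 .. L_i (0-based: indices j < i) *)
Definition prev_union (N l : nat) (L : 'I_l -> 'rV[K]_N -> Prop) (i : 'I_l) :=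
  fun x => exists j : 'I_l, (j < i)%N /\ L j x.

Definition linearly_joined (N l : nat) (L : 'I_l -> 'rV[K]_N -> Prop) :=
  forall i : 'I_l, (0 < i)%N -> forall x,
    (L i x /\ prev_union L i x) <-> (L i x /\ pspan (prev_union L i) x).

End Defs.

(* Main.v *)
Require Import Defs.
From HB Require Import structures.
From mathcomp Require Import all_boot all_order all_algebra.
From mathcomp Require Import mpoly.
From mathcomp Require Import ring.
Import GRing.Theory.
Local Open Scope ring_scope.
Set Implicit Arguments. Unset Strict Implicit. Unset Printing Implicit Defensive.
Section Aux.
Variable K : fieldType.

Lemma ig_gen N (P : {mpoly K[N]} -> Prop) p : P p -> ideal_gen P p.
Proof.
move=> Pp; exists [:: (1, p)]; split; first by move=> x; rewrite inE => /eqP ->.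
by rewrite big_seq1 mul1r.
Qed.

Lemma ig0 N (P : {mpoly K[N]} -> Prop) : ideal_gen P 0.
Proof. by exists [::]; split => //; rewrite big_nil. Qed.

Lemma igD N (P : {mpoly K[N]} -> Prop) a b :
  ideal_gen P a -> ideal_gen P b -> ideal_gen P (a + b).
Proof.
move=> [s1 [H1 ->]] [s2 [H2 ->]]; exists (s1 ++ s2); split; last by rewrite big_cat.
by move=> x; rewrite mem_cat => /orP[]; [apply: H1 | apply: H2].
Qed.

Lemma igM N (P : {mpoly K[N]} -> Prop) r a : ideal_gen P a -> ideal_gen P (r * a).
Proof.
move=> [s [H ->]]; exists [seq (r * x.1, x.2) | x <- s]; split.
  by move=> x /mapP [y ys ->] /=; apply: H.
by rewrite big_map big_distrr; apply: eq_bigr => x _ /=; rewrite mulrA.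
Qed.

Lemma igMr N (P : {mpoly K[N]} -> Prop) r a : ideal_gen P a -> ideal_gen P (a * r).
Proof. by rewrite mulrC; apply: igM. Qed.

Lemma igN N (P : {mpoly K[N]} -> Prop) a : ideal_gen P a -> ideal_gen P (- a).
Proof. by move=> h; rewrite -mulN1r; apply: igM. Qed.

Lemma igB N (P : {mpoly K[N]} -> Prop) a b :
  ideal_gen P a -> ideal_gen P b -> ideal_gen P (a - b).
Proof. by move=> ha hb; apply: igD => //; apply: igN. Qed.

Lemma igZ N (P : {mpoly K[N]} -> Prop) c a : ideal_gen P a -> ideal_gen P (c *: a).
Proof. by move=> h; rewrite -mul_mpolyC; apply: igM. Qed.

Lemma ig_sum N (P : {mpoly K[N]} -> Prop) (I : Type) (r : seq I) (Pi : pred I) F :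
  (forall i, Pi i -> ideal_gen P (F i)) -> ideal_gen P (\sum_(i <- r | Pi i) F i).
Proof. by move=> h; apply: big_ind => //; [apply: ig0 | apply: igD]. Qed.

Lemma ig_sub N (P P' : {mpoly K[N]} -> Prop) p :
  (forall q, P q -> ideal_gen P' q) -> ideal_gen P p -> ideal_gen P' p.
Proof.
move=> h [s [H ->]]; rewrite big_seq; apply: ig_sum => x xs.
by apply: igM; apply: h; apply: H.
Qed.

Lemma ig_morph N M (f : {mpoly K[N]} -> {mpoly K[M]}) (P : {mpoly K[N]} -> Prop) P' p :
  (forall a b, f (a + b) = f a + f b) -> f 0 = 0 -> (forall a b, f (a * b) = f a * f b) ->
  (forall q, P q -> ideal_gen P' (f q)) -> ideal_gen P p -> ideal_gen P' (f p).
Proof.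
move=> fD f0 fM h [s [H ->]].
rewrite (big_morph f fD f0) big_seq; apply: ig_sum => x xs.
by rewrite fM; apply: igM; apply: h; apply: H.
Qed.

Lemma linformD N (u v : 'rV[K]_N) : linform (u + v) = linform u + linform v.
Proof. by rewrite /linform -big_split; apply: eq_bigr => j _; rewrite mxE scalerDl. Qed.

Lemma linformZ N c (u : 'rV[K]_N) : linform (c *: u) = c *: linform u.
Proof. by rewrite /linform scaler_sumr; apply: eq_bigr => j _; rewrite mxE scalerA. Qed.

Lemma linform0 N : linform (0 : 'rV[K]_N) = 0.
Proof. by rewrite /linform big1 // => j _; rewrite mxE scale0r. Qed.

Lemma linformB N (u v : 'rV[K]_N) : linform (u - v) = linform u - linform v.
Proof.
by rewrite linformD -scaleN1r linformZ scaleN1r.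
Qed.

Lemma linform_sum N (I : Type) (r : seq I) (Pi : pred I) (F : I -> 'rV[K]_N) :
  linform (\sum_(i <- r | Pi i) F i) = \sum_(i <- r | Pi i) linform (F i).
Proof. exact: (big_morph _ (@linformD N) (@linform0 N)). Qed.

Lemma linform_delta N (i : 'I_N) : linform (delta_mx 0 i : 'rV[K]_N) = 'X_i.
Proof.
rewrite /linform (bigD1 i) //= big1 => [|j ji]; first by rewrite mxE !eqxx scale1r addr0.
by rewrite mxE eqxx /= (negbTE ji) scale0r.
Qed.

Definition sub N N' (M : 'M[K]_(N, N')) (p : {mpoly K[N]}) : {mpoly K[N']} :=
  comp_mpoly [tuple linform (row i M) | i < N] p.

Lemma subD N N' (M : 'M[K]_(N, N')) a b : sub M (a + b) = sub M a + sub M b.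
Proof. exact: comp_mpolyD. Qed.
Lemma sub0 N N' (M : 'M[K]_(N, N')) : sub M 0 = 0.
Proof. exact: comp_mpoly0. Qed.
Lemma subB N N' (M : 'M[K]_(N, N')) a b : sub M (a - b) = sub M a - sub M b.
Proof. exact: comp_mpolyB. Qed.
Lemma subM N N' (M : 'M[K]_(N, N')) a b : sub M (a * b) = sub M a * sub M b.
Proof. exact: rmorphM. Qed.
Lemma sub1 N N' (M : 'M[K]_(N, N')) : sub M 1 = 1.
Proof. exact: comp_mpoly1. Qed.
Lemma subZ N N' (M : 'M[K]_(N, N')) c a : sub M (c *: a) = c *: sub M a.
Proof. exact: comp_mpolyZ. Qed.

Lemma subL N N' (M : 'M[K]_(N, N')) v : sub M (linform v) = linform (v *m M).
Proof.
rewrite mulmx_sum_row linform_sum /linform (big_morph _ (subD M) (sub0 M)); apply: eq_bigr => j _.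
rewrite subZ /sub comp_mpolyXU -tnth_nth tnth_mktuple -linformZ.
by [].
Qed.

Lemma mpoly_pred_ind N (T : {mpoly K[N]} -> Prop) :
  T 1 -> (forall i, T 'X_i) -> (forall a b, T a -> T b -> T (a + b)) ->
  (forall c a, T a -> T (c *: a)) -> (forall a b, T a -> T b -> T (a * b)) ->
  forall p, T p.
Proof.
move=> T1 TX TD TZ TM p.
have T0 : T 0 by rewrite -(scale0r 1); apply: TZ.
rewrite (mpolyE p); apply: big_ind => // m _; apply: TZ.
rewrite mpolyXE_id; apply: big_ind => // i _.
by elim: (m i) => [|k IH]; rewrite ?expr0 // exprS; apply: TM.
Qed.

End Aux.

Section Aux2.
Variable K : fieldType.

Definition dot N (u x : 'rV[K]_N) := \sum_j u 0 j * x 0 j.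

Lemma evalL N (v x : 'rV[K]_N) : (linform v).@[fun j => x 0 j] = dot v x.
Proof.
rewrite /linform /dot (big_morph _ (mevalD _) (meval0 _)); apply: eq_bigr => j _.
by rewrite mevalZ mevalXU.
Qed.

Lemma ig_eval N (P : {mpoly K[N]} -> Prop) e p :
  (forall q, P q -> q.@[e] = 0) -> ideal_gen P p -> p.@[e] = 0.
Proof.
move=> h [s [H ->]]; rewrite (big_morph _ (mevalD _) (meval0 _)) big_seq big1 // => x xs.
by rewrite mevalM (h _ (H _ xs)) mulr0.
Qed.

Lemma Zset_lin N (S : 'rV[K]_N -> Prop) x :
  Zset (lin_ideal S) x <-> x != 0 /\ forall v, S v -> dot v x = 0.
Proof.
split => [[nz H]|[nz H]]; split => //.
  by move=> v Sv; rewrite -evalL; apply: H; apply: ig_gen; exists v.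
move=> p; apply: ig_eval => q [v [Sv ->]]; rewrite evalL; exact: H.
Qed.

Lemma Zset_add N (I J : {mpoly K[N]} -> Prop) x : I 0 -> J 0 ->
  Zset (ideal_add I J) x <-> x != 0 /\ (forall p, I p -> p.@[fun j => x 0 j] = 0)
     /\ (forall p, J p -> p.@[fun j => x 0 j] = 0).
Proof.
move=> I0 J0; split => [[nz H]|[nz [H1 H2]]].
  split => //; split => p hp; apply: H.
    by exists p, 0; rewrite addr0.
  by exists 0, p; rewrite add0r.
split => // p [a [b [ha [hb ->]]]]; by rewrite mevalD H1 // H2 // addr0.
Qed.

Lemma dotD N (u v x : 'rV[K]_N) : dot (u + v) x = dot u x + dot v x.
Proof. by rewrite /dot -big_split; apply: eq_bigr => j _; rewrite mxE mulrDl. Qed.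
Lemma dot0l N (x : 'rV[K]_N) : dot 0 x = 0.
Proof. by rewrite /dot big1 // => j _; rewrite mxE mul0r. Qed.
Lemma dot0r N (x : 'rV[K]_N) : dot x 0 = 0.
Proof. by rewrite /dot big1 // => j _; rewrite mxE mulr0. Qed.
Lemma dot_sum N (I : Type) (r : seq I) (Pi : pred I) (F : I -> 'rV[K]_N) x :
  dot (\sum_(i <- r | Pi i) F i) x = \sum_(i <- r | Pi i) dot (F i) x.
Proof. exact: (big_morph _ (fun u v => dotD u v x) (dot0l x)). Qed.
Lemma dot_split N1 N2 (u x : 'rV[K]_(N1 + N2)) :
  dot u x = dot (lsubmx u) (lsubmx x) + dot (rsubmx u) (rsubmx x).
Proof. by rewrite /dot big_split_ord; congr (_ + _); apply: eq_bigr => j _; rewrite !mxE. Qed.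
Lemma dot_delta N (j : 'I_N) (z : 'rV[K]_N) : dot (delta_mx 0 j) z = z 0 j.
Proof.
rewrite /dot (bigD1 j) //= big1 => [|k kj]; first by rewrite mxE !eqxx mul1r addr0.
by rewrite mxE eqxx /= (negbTE kj) mul0r.
Qed.

Definition orth r N (A : 'M[K]_(r, N)) (z : 'rV[K]_N) :=
  forall u : 'rV_N, (u <= A)%MS -> dot u z = 0.

Lemma orth0 r N (A : 'M[K]_(r, N)) : orth A 0.
Proof. by move=> u _; rewrite dot0r. Qed.

Lemma orth_sub r1 r2 N (A : 'M[K]_(r1, N)) (B : 'M[K]_(r2, N)) z :
  (A <= B)%MS -> orth B z -> orth A z.
Proof. by move=> sAB h u hu; apply: h; apply: submx_trans sAB. Qed.

Lemma orth_sums (I : finType) (P : pred I) N (B : I -> 'M[K]_N) z :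
  (forall i, P i -> orth (B i) z) -> orth (\sum_(i | P i) B i)%MS z.
Proof.
move=> h u /sub_sumsmxP [u_ ->]; rewrite dot_sum big1 // => i Pi.
by apply: (h i Pi); exact: submxMl.
Qed.

Lemma orth1 N (z : 'rV[K]_N) : orth (1%:M : 'M_N) z -> z = 0.
Proof. by move=> h; apply/rowP => j; rewrite mxE -dot_delta; apply: h; apply: submx1. Qed.

Lemma sub_block n m (A : 'M[K]_n) (B : 'M[K]_m) (u : 'rV[K]_(n + m)) :
  (u <= block_mx A 0 0 B)%MS <-> (lsubmx u <= A)%MS /\ (rsubmx u <= B)%MS.
Proof.
split.
  case/submxP => w ->; rewrite -(hsubmxK w) mul_row_block !mulmx0 addr0 add0r.
  by rewrite row_mxKl row_mxKr !submxMl.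
move=> [/submxP [w1 e1] /submxP [w2 e2]]; apply/submxP; exists (row_mx w1 w2).
by rewrite mul_row_block !mulmx0 addr0 add0r -e1 -e2 hsubmxK.
Qed.

Lemma plin_char N (W : 'M[K]_N) x : plinear W x <-> x != 0 /\ orth W x.
Proof. exact: Zset_lin. Qed.

Section Part1.
Variables (n m l : nat) (Q : 'I_l -> 'M[K]_n) (F : 'I_l -> 'M[K]_m).
Hypothesis hF1 : (1%:M <= \sum_i F i)%MS.

Lemma z0 i z : orth (\sum_(j | j != i) F j)%MS z -> orth (F i) z -> z = 0.
Proof.
move=> hg hf; apply: orth1; apply: orth_sub hF1 _; apply: orth_sums => k _.
case: (eqVneq k i) => [->//|ki]; apply: orth_sub hg.
exact: (sumsmx_sup k).
Qed.

Lemma FG i j : i != j -> (F i <= \sum_(k | k != j) F k)%MS.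
Proof. by move=> ij; apply: (sumsmx_sup i). Qed.

Lemma z0' i j z : i != j -> orth (\sum_(k | k != i) F k)%MS z ->
  orth (\sum_(k | k != j) F k)%MS z -> z = 0.
Proof. by move=> ij hi hj; apply: (z0 hi); apply: orth_sub hj; apply: FG. Qed.

Lemma Lt_char i (x : 'rV[K]_(n + m)) :
  Zset (lin_ideal (fun v : 'rV[K]_(n + m) =>
    (lsubmx v <= Q i)%MS /\ (rsubmx v <= \sum_(j | j != i) F j)%MS)) x <->
  x != 0 /\ orth (Q i) (lsubmx x) /\ orth (\sum_(j | j != i) F j)%MS (rsubmx x).
Proof.
rewrite Zset_lin; split => [[nz H]|[nz [h1 h2]]].
  split => //; split => u hu.
    have := H (row_mx u 0); rewrite dot_split row_mxKl row_mxKr dot0l addr0; apply.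
    by split => //; rewrite sub0mx.
  have := H (row_mx 0 u); rewrite dot_split row_mxKl row_mxKr dot0l add0r; apply.
  by split => //; rewrite sub0mx.
by split => // v [hv1 hv2]; rewrite dot_split h1 // h2 // addr0.
Qed.

Lemma L'_char i (x : 'rV[K]_(n + m)) :
  Zset (ideal_add
      (lin_ideal (fun v : 'rV[K]_(n + m) => (lsubmx v <= Q i)%MS /\ rsubmx v = 0))
      (lin_ideal (fun v : 'rV[K]_(n + m) => lsubmx v = 0))) x <->
  x != 0 /\ orth (Q i) (lsubmx x) /\ rsubmx x = 0.
Proof.
rewrite Zset_add; try exact: ig0.
split => [[nz [H1 H2]]|[nz [h1 h2]]].
  split => //; split.
    move=> u hu; have := H1 (linform (row_mx u 0)).
    rewrite evalL dot_split row_mxKl row_mxKr dot0l addr0; apply.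
    by apply: ig_gen; exists (row_mx u 0); rewrite row_mxKl row_mxKr.
  apply: orth1 => u _; have := H2 (linform (row_mx 0 u)).
  rewrite evalL dot_split row_mxKl row_mxKr dot0l add0r; apply.
  by apply: ig_gen; exists (row_mx 0 u); rewrite row_mxKl.
split => //; split => p; apply: ig_eval => q [v [hv ->]]; rewrite evalL dot_split.
  by case: hv => hv1 hv2; rewrite h1 // hv2 dot0l addr0.
by rewrite hv dot0l h2 dot0r addr0.
Qed.

Lemma part1 :
  linearly_joined (fun i => Zset (lin_ideal (fun v : 'rV[K]_n => (v <= Q i)%MS))) ->
  let Qt := fun (i : 'I_l) (v : 'rV[K]_(n + m)) =>
    (lsubmx v <= Q i)%MS /\ (rsubmx v <= \sum_(j | j != i) F j)%MS in
  let Lt := fun i => Zset (lin_ideal (Qt i)) in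
  let L' := fun i => Zset (ideal_add
      (lin_ideal (fun v : 'rV[K]_(n + m) => (lsubmx v <= Q i)%MS /\ rsubmx v = 0))
      (lin_ideal (fun v : 'rV[K]_(n + m) => lsubmx v = 0))) in
  (linearly_joined Lt /\
   forall i : 'I_l, (0 < i)%N -> forall x,
     (Lt i x /\ prev_union Lt i x) <-> (L' i x /\ prev_union L' i x)).
Proof.
move=> H Qt Lt L'.
have LtE : forall i x, Lt i x <-> x != 0 /\ orth (Q i) (lsubmx x) /\
    orth (\sum_(j | j != i) F j)%MS (rsubmx x) by move=> i x; apply: Lt_char.
have L'E : forall i x, L' i x <-> x != 0 /\ orth (Q i) (lsubmx x) /\ rsubmx x = 0
  by move=> i x; apply: L'_char.
have LE : forall i (y : 'rV[K]_n), Zset (lin_ideal (fun v : 'rV[K]_n => (v <= Q i)%MS)) y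
    <-> y != 0 /\ orth (Q i) y by move=> i y; apply: Zset_lin.
have neq : forall i j : 'I_l, (j < i)%N -> j != i.
  by move=> i j ji; apply/eqP => e; rewrite e ltnn in ji.
split; last first.
  move=> i _ x; split.
    move=> [/LtE [nz [hq hg]] [j [ji /LtE [_ [hqj hgj]]]]].
    have hz : rsubmx x = 0 by apply: (z0' (neq _ _ ji)) hgj hg.
    by split; [apply/L'E | exists j; split => //; apply/L'E].
  move=> [/L'E [nz [hq hz]] [j [ji /L'E [_ [hqj _]]]]].
  split; first by apply/LtE; rewrite hz; split => //; split => //; apply: orth0.
  by exists j; split => //; apply/LtE; rewrite hz; split => //; split => //; apply: orth0.
move=> i i0 x; split => [[h1 [j [ji hj]]]|[h1 hspan]].
  by split => // W HW; apply: HW; exists j.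
split => //.
have [nz [hq hg]] := (LtE i x).1 h1.
have hz : rsubmx x = 0.
  apply: (z0 hg) => f hf.
  have hW : forall y, prev_union Lt i y -> plinear (block_mx 0 0 0 (F i)) y.
    move=> y [j [ji /LtE [nzy [_ hgy]]]]; apply/plin_char; split => // u.
    move=> /sub_block [hl hr]; move: hl; rewrite submx0 => /eqP hl.
    rewrite dot_split hl dot0l add0r; apply: hgy; apply: submx_trans hr _.
    by apply: FG; rewrite eq_sym neq.
  have [_ ho] := (plin_char _ _).1 (hspan _ hW).
  have := ho (row_mx 0 f); rewrite dot_split row_mxKl row_mxKr dot0l add0r; apply.
  by apply/sub_block; rewrite row_mxKl row_mxKr sub0mx hf.
set y := lsubmx x.
have ny : y != 0.
  by apply: contra nz => /eqP y0; rewrite -(hsubmxK x) hz -/y y0 row_mx0.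
have Ly : Zset (lin_ideal (fun v : 'rV[K]_n => (v <= Q i)%MS)) y by apply/LE.
have Sy : pspan (prev_union (fun i => Zset (lin_ideal (fun v : 'rV[K]_n => (v <= Q i)%MS))) i) y.
  move=> W0 HW0; apply/plin_char; split => //.
  have hW : forall x', prev_union Lt i x' -> plinear (block_mx W0 0 0 0) x'.
    move=> x' [j [ji /LtE [nz' [hq' hg']]]]; apply/plin_char; split => // u.
    move=> /sub_block [hl hr]; move: hr; rewrite submx0 => /eqP hr.
    rewrite dot_split hr dot0l addr0.
    case: (eqVneq (lsubmx x') 0) => [->|ny']; first by rewrite dot0r.
    have hp : prev_union (fun i => Zset (lin_ideal (fun v : 'rV[K]_n => (v <= Q i)%MS))) i (lsubmx x').
      by exists j; split => //; apply/LE.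
    by have [_ ho'] := (plin_char _ _).1 (HW0 _ hp); apply: ho'.
  have [_ ho] := (plin_char _ _).1 (hspan _ hW).
  move=> w hw; have := ho (row_mx w 0); rewrite dot_split row_mxKl row_mxKr dot0l addr0.
  by apply; apply/sub_block; rewrite row_mxKl row_mxKr sub0mx hw.
have [_ [j [ji Lj]]] := (H i i0 y).2 (conj Ly Sy).
exists j; split => //; apply/LtE; split => //; split; first by case/LE: Lj.
by rewrite hz; apply: orth0.
Qed.

End Part1.
End Aux2.

Section Aux3.
Variable K : fieldType.

Lemma ig_false N (p : {mpoly K[N]}) : ideal_gen (fun _ => False) p -> p = 0.
Proof.
case=> [[|x s] [H ->]]; first by rewrite big_nil.
by case: (H x (mem_head _ _)).
Qed.

Lemma ig_mul2 N (P P' P'' : {mpoly K[N]} -> Prop) a b :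
  (forall q r, P q -> P' r -> ideal_gen P'' (q * r)) ->
  ideal_gen P a -> ideal_gen P' b -> ideal_gen P'' (a * b).
Proof.
move=> h [s [H ->]] [s' [H' ->]].
rewrite big_distrl big_seq /=; apply: ig_sum => x xs; rewrite -mulrA; apply: igM.
rewrite big_distrr big_seq /=; apply: ig_sum => y ys.
by rewrite mulrCA; apply: igM; apply: h; [apply: H | apply: H'].
Qed.

Lemma hom_diff N M (f g : {mpoly K[N]} -> {mpoly K[M]}) (P : {mpoly K[M]} -> Prop) :
  (forall a b, f (a + b) = f a + f b) -> (forall a b, g (a + b) = g a + g b) ->
  (forall c a, f (c *: a) = c *: f a) -> (forall c a, g (c *: a) = c *: g a) ->
  (forall a b, f (a * b) = f a * f b) -> (forall a b, g (a * b) = g a * g b) ->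
  f 1 = g 1 -> (forall v, ideal_gen P (f (linform v) - g (linform v))) ->
  forall p, ideal_gen P (f p - g p).
Proof.
move=> fD gD fZ gZ fM gM f1 hX; apply: mpoly_pred_ind.
- by rewrite f1 subrr; apply: ig0.
- by move=> i; rewrite -linform_delta.
- by move=> a b ha hb; rewrite fD gD opprD addrACA; apply: igD.
- by move=> c a ha; rewrite fZ gZ -scalerBr; apply: igZ.
move=> a b ha hb; rewrite fM gM.
have -> : f a * f b - g a * g b = (f a - g a) * f b + g a * (f b - g b).
  by rewrite mulrBl mulrBr addrA subrK.
by apply: igD; [apply: igMr | apply: igM].
Qed.

Lemma key_id (R : comRingType) (I : finType) (ta tb : R) (da db : I -> R) :
  (ta + \sum_k da k) * (tb + \sum_k db k) -
    (ta * tb + \sum_k ((ta + da k) * (tb + db k) - ta * tb)) =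
  \sum_j \sum_(k | k != j) da j * db k.
Proof.
have e1 : \sum_k ((ta + da k) * (tb + db k) - ta * tb) =
    ta * \sum_k db k + (\sum_k da k) * tb + \sum_k da k * db k.
  rewrite big_distrr big_distrl /= -!big_split /=; apply: eq_bigr => k _; ring.
have e2 : (\sum_k da k) * (\sum_k db k) =
    \sum_k da k * db k + \sum_j \sum_(k | k != j) da j * db k.
  rewrite big_distrl -big_split /=; apply: eq_bigr => j _.
  by rewrite big_distrr (bigD1 j) //=.
rewrite e1; transitivity ((\sum_k da k) * (\sum_k db k) - \sum_k da k * db k).
  ring.
by rewrite e2; ring.
Qed.

Lemma add_aux (R : comRingType) (a b ta tb sa sb : R) :
  a + b - (ta + tb + (sa + sb)) = (a - (ta + sa)) + (b - (tb + sb)).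
Proof. ring. Qed.

Lemma mul_aux (R : comRingType) (a b pa pb pab : R) :
  a * b - pab = (a - pa) * b + pa * (b - pb) + (pa * pb - pab).
Proof. ring. Qed.

Lemma embl_lin n m (u : 'rV[K]_n) : embl m (linform u) = linform (row_mx u 0).
Proof.
rewrite /embl /linform raddf_sum /= big_split_ord /=.
rewrite [X in _ = _ + X]big1 ?addr0 => [|j _]; last by rewrite row_mxEr mxE scale0r.
apply: eq_bigr => i _; rewrite comp_mpolyZ comp_mpolyXU -tnth_nth tnth_mktuple.
by rewrite row_mxEl.
Qed.

Lemma emblD n m a b : embl m (a + b) = embl m a + embl m b :> {mpoly K[n + m]}.
Proof. exact: comp_mpolyD. Qed.
Lemma emblZ n m c (a : {mpoly K[n]}) : embl m (c *: a) = c *: embl m a.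
Proof. exact: comp_mpolyZ. Qed.
Lemma emblM n m (a b : {mpoly K[n]}) : embl m (a * b) = embl m a * embl m b.
Proof. exact: rmorphM. Qed.
Lemma embl1 n m : embl m (1 : {mpoly K[n]}) = 1.
Proof. exact: comp_mpoly1. Qed.
Lemma embl0 n m : embl m (0 : {mpoly K[n]}) = 0.
Proof. exact: comp_mpoly0. Qed.

End Aux3.

Section Part2.
Variable K : fieldType.
Variables (n m l : nat) (Q : 'I_l -> 'M[K]_n) (F : 'I_l -> 'M[K]_m).
Hypothesis hdir : mxdirect (\sum_i F i).
Hypothesis hF1 : (1%:M <= \sum_i F i)%MS.

Let G i := (\sum_(j | j != i) F j)%MS.
Let E i := proj_mx (F i) (G i).

Lemma hcap i : (F i :&: G i = 0)%MS.
Proof. by move/mxdirect_sumsP: hdir => /(_ i isT). Qed.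

Lemma E_id i (g : 'rV[K]_m) : (g <= F i)%MS -> g *m E i = g.
Proof. by move=> h; apply: proj_mx_id => //; apply: hcap. Qed.
Lemma E_0 i (g : 'rV[K]_m) : (g <= G i)%MS -> g *m E i = 0.
Proof. by move=> h; apply: proj_mx_0 => //; apply: hcap. Qed.
Lemma E_sub i (g : 'rV[K]_m) : (g *m E i <= F i)%MS.
Proof. exact: proj_mx_sub. Qed.

Lemma E_sum (g : 'rV[K]_m) : \sum_i g *m E i = g.
Proof.
have /sub_sumsmxP [u eg] : (g <= \sum_i F i)%MS by apply: submx_trans hF1; apply: submx1.
rewrite [in RHS]eg; transitivity (\sum_i \sum_j (u j *m F j) *m E i).
  by apply: eq_bigr => i _; rewrite {1}eg mulmx_suml.
rewrite exchange_big; apply: eq_bigr => j _ /=.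
rewrite (bigD1 j) //= E_id ?submxMl // big1 ?addr0 // => i ij.
apply: E_0; apply: submx_trans (submxMl _ _) _.
by apply: FG; rewrite eq_sym.
Qed.

Notation P := {mpoly K[n + m]}.
Definition pim := sub (col_mx 1%:M 0 : 'M[K]_(n + m, n)).
Definition tau (p : P) : P := embl m (pim p).
Definition rho i : P -> P := sub (block_mx 1%:M 0 0 (E i) : 'M[K]_(n + m)).
Definition D i (p : P) := rho i p - tau p.

Lemma pimL v : pim (linform v) = linform (lsubmx v).
Proof.
by rewrite /pim subL -{1}(hsubmxK v) mul_row_col mulmx1 mulmx0 addr0.
Qed.
Lemma tauL v : tau (linform v) = linform (row_mx (lsubmx v) 0).
Proof. by rewrite /tau pimL embl_lin. Qed.
Lemma rhoL i v : rho i (linform v) = linform (row_mx (lsubmx v) (rsubmx v *m E i)).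
Proof.
by rewrite /rho subL -{1}(hsubmxK v) mul_row_block !mulmx0 mulmx1 addr0 add0r.
Qed.

Lemma tauD a b : tau (a + b) = tau a + tau b.
Proof. by rewrite /tau /pim subD emblD. Qed.
Lemma tauZ c a : tau (c *: a) = c *: tau a.
Proof. by rewrite /tau /pim subZ emblZ. Qed.
Lemma tauM a b : tau (a * b) = tau a * tau b.
Proof. by rewrite /tau /pim subM emblM. Qed.
Lemma tau1 : tau 1 = 1.
Proof. by rewrite /tau /pim sub1 embl1. Qed.
Lemma tau0 : tau 0 = 0.
Proof. by rewrite /tau /pim sub0 embl0. Qed.
Lemma rhoD i a b : rho i (a + b) = rho i a + rho i b. Proof. exact: subD. Qed.
Lemma rhoZ i c a : rho i (c *: a) = c *: rho i a. Proof. exact: subZ. Qed.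
Lemma rhoM i a b : rho i (a * b) = rho i a * rho i b. Proof. exact: subM. Qed.
Lemma rho1 i : rho i 1 = 1. Proof. exact: sub1. Qed.
Lemma rho0 i : rho i 0 = 0. Proof. exact: sub0. Qed.
Lemma rhoB i a b : rho i (a - b) = rho i a - rho i b. Proof. exact: subB. Qed.

Definition IV := lin_ideal (fun v : 'rV[K]_(n + m) => lsubmx v = 0).
Definition IF k := lin_ideal (fun v : 'rV[K]_(n + m) => lsubmx v = 0 /\ (rsubmx v <= F k)%MS).
Definition Qt (k : 'I_l) (v : 'rV[K]_(n + m)) :=
  (lsubmx v <= Q k)%MS /\ (rsubmx v <= \sum_(j | j != k) F j)%MS.
Definition gens k := fun q : P => exists f g, Qt k f /\ (g <= F k)%MS /\
   q = linform f * linform (row_mx 0 g).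
Definition J := ideal_bigsum (fun k => ideal_gen (gens k)).

Lemma S1 q : IV (q - tau q).
Proof.
rewrite /IV /lin_ideal.
apply: (hom_diff (f := id)) => //; [exact: tauD | exact: tauZ | exact: tauM | by rewrite tau1 |].
move=> v /=; rewrite tauL -linformB; apply: ig_gen; exists (v - row_mx (lsubmx v) 0).
by rewrite linearB /= row_mxKl subrr.
Qed.

Lemma S2 k q : IV q -> IF k (rho k q).
Proof.
apply: ig_morph; [exact: rhoD | exact: rho0 | exact: rhoM |].
move=> _ [v [hv ->]]; rewrite rhoL; apply: ig_gen; eexists; split; last by reflexivity.
by rewrite row_mxKl row_mxKr hv E_sub.
Qed.

Lemma S3 k q : rho k (tau q) = tau q.
Proof.
apply/eqP; rewrite -subr_eq0; apply/eqP.
apply: (@ig_false _ _ (rho k (tau q) - tau q)); move: q.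
apply: (hom_diff (f := fun q => rho k (tau q))).
- by move=> a b; rewrite tauD rhoD.
- exact: tauD.
- by move=> c a; rewrite tauZ rhoZ.
- exact: tauZ.
- by move=> a b; rewrite tauM rhoM.
- exact: tauM.
- by rewrite tau1 rho1.
move=> v; rewrite tauL rhoL row_mxKl row_mxKr mul0mx subrr; exact: ig0.
Qed.

Lemma S4 k q : IF k (D k q).
Proof. by rewrite /D -[X in _ - X](S3 k q) -rhoB; apply: S2; apply: S1. Qed.

Lemma DD k a b : D k (a + b) = D k a + D k b.
Proof. by rewrite /D rhoD tauD opprD addrACA. Qed.
Lemma D0 k : D k 0 = 0.
Proof. by rewrite /D rho0 tau0 subrr. Qed.

Lemma S5 k p : lin_ideal (Qt k) p -> ideal_gen (gens k) (D k p).
Proof.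
move=> [s [H ->]]; rewrite (big_morph _ (DD k) (D0 k)) big_seq; apply: ig_sum => x xs.
have [v [hv ->]] := H x xs.
have -> : D k (x.1 * linform v) = D k x.1 * linform (row_mx (lsubmx v) 0).
  by rewrite /D rhoM tauM rhoL tauL E_0 ?mulrBl //; case: hv.
apply: (ig_mul2 (P' := fun r => r = linform (row_mx (lsubmx v) 0))); last first.
- exact: ig_gen.
- exact: S4.
move=> _ r [w [[hw1 hw2] ->]] ->; apply: ig_gen.
exists (row_mx (lsubmx v) 0), (rsubmx w); split.
  by rewrite /Qt row_mxKl row_mxKr sub0mx; case: hv.
split => //; rewrite mulrC; congr (_ * _); congr linform.
by rewrite -{1}(hsubmxK w) hw1.
Qed.

Lemma Jk k p : ideal_gen (gens k) p -> J p.
Proof. by move=> h; apply: ig_gen; exists k. Qed.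

Lemma S_off j k a b : j != k -> IF j a -> IF k b -> J (a * b).
Proof.
move=> jk ha hb; apply: (Jk (k := k)); move: ha hb; apply: ig_mul2.
move=> _ _ [w [[hw1 hw2] ->]] [w' [[hw1' hw2'] ->]]; apply: ig_gen.
exists w, (rsubmx w'); split.
  by rewrite /Qt hw1 sub0mx; split => //; apply: submx_trans hw2 _; apply: FG.
by split => //; congr (_ * linform _); rewrite -{1}(hsubmxK w') hw1'.
Qed.

Definition Phi p := tau p + \sum_k D k p.

Lemma PhiL v : Phi (linform v) = linform v.
Proof.
rewrite /Phi /D tauL.
under eq_bigr => k _ do rewrite rhoL -linformB opp_row_mx add_row_mx subrr oppr0 addr0.
rewrite -linform_sum -linformD.
have hD : forall a b : 'rV[K]_m, row_mx (0 : 'rV[K]_n) (a + b) = row_mx 0 a + row_mx 0 b.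
  by move=> a b; rewrite add_row_mx addr0.
have h0 : row_mx (0 : 'rV[K]_n) (0 : 'rV[K]_m) = 0 by rewrite row_mx0.
rewrite -(big_morph _ hD h0).
by rewrite E_sum add_row_mx addr0 add0r hsubmxK.
Qed.

Lemma S6 q : J (q - Phi q).
Proof.
rewrite /J /ideal_bigsum; move: q; apply: mpoly_pred_ind.
- rewrite /Phi tau1 big1 ?addr0 ?subrr; first exact: ig0.
  by move=> k _; rewrite /D rho1 tau1 subrr.
- by move=> i; rewrite -linform_delta PhiL subrr; exact: ig0.
- move=> a b ha hb; rewrite /Phi tauD.
  under eq_bigr => k _ do rewrite DD.
  rewrite big_split /=.
  by rewrite (addrACA (tau a)) opprD addrACA; apply: igD; [exact: ha | exact: hb].
- move=> c a ha; rewrite /Phi tauZ.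
  under eq_bigr => k _ do rewrite /D rhoZ tauZ -scalerBr.
  rewrite -scaler_sumr -scalerDr -scalerBr; exact: igZ.
move=> a b ha hb.
have e := mul_aux a b (Phi a) (Phi b); rewrite e; apply: igD.
  by apply: igD; [exact: (igMr b ha) | exact: (igM (Phi a) hb)].
have e2 : Phi (a * b) = tau a * tau b +
   \sum_k ((tau a + D k a) * (tau b + D k b) - tau a * tau b).
  rewrite /Phi tauM; congr (_ + _); apply: eq_bigr => k _.
  by rewrite /D rhoM tauM [tau a + _]addrC [tau b + _]addrC !subrK.
rewrite e2 /Phi key_id; apply: ig_sum => j _; apply: ig_sum => k kj.
by apply: (S_off (j := j) (k := k)); [rewrite eq_sym | apply: S4 | apply: S4].
Qed.

End Part2.

Unset Implicit Arguments. Set Strict Implicit.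

Theorem mainTheorem6 (K : fieldType) (n m l : nat)
  (Q : 'I_l -> 'M[K]_n) (F : 'I_l -> 'M[K]_m) :
  (* V' = F_1 (+) ... (+) F_l *)
  mxdirect (\sum_i F i) -> (\sum_i F i == 1%:M)%MS ->
  (* L_i defined by (Q_i) in P(V^* ) form a linearly joined sequence *)
  linearly_joined (fun i => Zset (lin_ideal (fun v : 'rV[K]_n => (v <= Q i)%MS))) ->
  let Qt := fun (i : 'I_l) (v : 'rV[K]_(n + m)) =>
    (lsubmx v <= Q i)%MS /\ (rsubmx v <= \sum_(j | j != i) F j)%MS in
  let Lt := fun i => Zset (lin_ideal (Qt i)) in
  (* L_i identified with the linear space defined by (Q_i) + (V') *)
  let L' := fun i => Zset (ideal_add
      (lin_ideal (fun v : 'rV[K]_(n + m) => (lsubmx v <= Q i)%MS /\ rsubmx v = 0))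
      (lin_ideal (fun v : 'rV[K]_(n + m) => lsubmx v = 0))) in
  (linearly_joined Lt /\
   forall i : 'I_l, (0 < i)%N -> forall x,
     (Lt i x /\ prev_union Lt i x) <-> (L' i x /\ prev_union L' i x)) /\
  (forall p : {mpoly K[n + m]},
     ideal_bigcap (fun i => lin_ideal (Qt i)) p <->
     ideal_add
       (@ideal_ext K n m (ideal_bigcap (fun i => lin_ideal (fun v : 'rV[K]_n => (v <= Q i)%MS))))
       (ideal_bigsum (fun i => ideal_gen (fun q => exists f g,
          Qt i f /\ (g <= F i)%MS /\ q = linform f * linform (row_mx 0 g)))) p).
Proof.
move=> hdir hF hLJ Qt Lt L'.
have hF1 : (1%:M <= \sum_i F i)%MS by case/andP: hF.
split; first exact: (part1 hF1 hLJ).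
move=> p; split.
  move=> hp.
  exists (tau p), (p - tau p); split; last split; last by rewrite addrC subrK.
    apply: ig_gen; exists (pim p); split => // i.
    move: (hp i); apply: ig_morph; [exact: subD | exact: sub0 | exact: subM |].
    move=> _ [v [hv ->]]; rewrite pimL; apply: ig_gen; exists (lsubmx v); split => //.
    by case: hv.
  have -> : p - tau p = (p - Phi F p) + \sum_k D F k p.
    by rewrite /Phi opprD addrA subrK.
  apply: igD; first exact: (S6 Q hdir hF1 p).
  apply: ig_sum => k _; apply: Jk; apply: (S5 hdir); exact: hp k.
move=> [a [b [ha [hb ->]]]] i; apply: igD.
  move: ha; apply: ig_sub => _ [q [hq ->]].
  move: (hq i); apply: ig_morph; [exact: emblD | exact: embl0 | exact: emblM |].
  move=> _ [u [hu ->]]; rewrite embl_lin; apply: ig_gen; exists (row_mx u 0).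
  by split => //; rewrite /Qt /= row_mxKl row_mxKr sub0mx; split.
move: hb; apply: ig_sub => q [k hk]; move: hk; apply: ig_sub => _ [f [g [hf [hg ->]]]].
case: (eqVneq k i) => [<-|ki].
  by apply: igMr; apply: ig_gen; exists f.
apply: igM; apply: ig_gen; exists (row_mx 0 g); split => //.
rewrite /Qt /= row_mxKl row_mxKr sub0mx; split => //.
by apply: submx_trans hg (FG F ki).
Qed.
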